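(* Let $\mathcal{A}=\{A_1,\dots,A_J\}$ be a partition of $\mathcal{X}$ with $\pi_k[A_j]>0$ for all $k,j$. For every $i,j\in\{1,\dots,J\}$ and every $k\in\{0,\dots,N-1\}$, $$\frac{\int_{A_i}\int_{A_j}\min\{\pi_k(z)\pi_{k+1}(w),\,\pi_k(w)\pi_{k+1}(z)\}\,\lambda(dw)\,\lambda(dz)}{\pi_k[A_i]\,\pi_{k+1}[A_j]}\;\ge\;\delta(\mathcal{A})^2.$$
   Context: $(\mathcal{X},\mathcal{F},\lambda)$ is a measure space; $N\ge1$; $\pi_0,\dots,\pi_N$ are probability densities w.r.t. $\lambda$, and $\pi_k[A]=\int_A\pi_k\,d\lambda$. Overlap: $\delta(\mathcal{A})=\min_{|k-l|=1,\ j\in\{1,\dots,J\}}\frac{1}{\pi_k[A_j]}\int_{A_j}\min\{\pi_k(z),\pi_l(z)\}\lambda(dz)$, where $k,l$ range over $\{0,\dots,N\}$. (The left-hand side is the stationary probability of accepting a proposed swap between levels $k$ and $k+1$ given $x_{[k]}\in A_i$, $x_{[k+1]}\in A_j$.) *)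

(* Defs.v *)
From HB Require Import structures.
From mathcomp Require Import all_boot all_order all_algebra.
From mathcomp Require Import all_classical all_reals all_analysis.
Set Implicit Arguments. Unset Strict Implicit. Unset Printing Implicit Defensive.
Import Order.TTheory GRing.Theory Num.Theory.
Local Open Scope classical_set_scope.
Local Open Scope ring_scope.
Local Open Scope ereal_scope.

Section Defs.
Context (d : measure_display) (T : measurableType d) (R : realType)
  (lam : {measure set T -> \bar R}).

Definition piA (pi : nat -> T -> R) (k : nat) (A : set T) : \bar R :=
  \int[lam]_(x in A) (pi k x)%:E.

Definition overlap_ratio (pi : nat -> T -> R) (k l : nat) (A : set T) : \bar R :=
  (\int[lam]_(z in A) (Num.min (pi k z) (pi l z))%:E) / piA pi k A.

Definition delta (N J : nat) (pi : nat -> T -> R) (A : 'I_J -> set T) : \bar R :=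
  \big[Order.min/+oo]_(k : 'I_N.+1)
    \big[Order.min/+oo]_(l : 'I_N.+1 | (k.+1 == l :> nat) || (l.+1 == k :> nat))
      \big[Order.min/+oo]_(j < J) overlap_ratio pi k l (A j).

Definition prob_densities (N : nat) (pi : nat -> T -> R) : Prop :=
  forall k, (k <= N)%N ->
    [/\ measurable_fun setT (pi k), (forall x, 0 <= pi k x)%R &
        \int[lam]_x (pi k x)%:E = 1].

Definition is_partition (J : nat) (A : 'I_J -> set T) : Prop :=
  [/\ forall j, measurable (A j),
      forall i j, i != j -> A i `&` A j = set0 &
      \bigcup_j A j = setT].

End Defs.

(* Main.v *)
Require Import Defs.
From HB Require Import structures.
From mathcomp Require Import all_boot all_order all_algebra.
From mathcomp Require Import all_classical all_reals all_analysis.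
From mathcomp Require Import measurable_realfun.
Import Order.TTheory GRing.Theory Num.Theory.
Local Open Scope classical_set_scope.
Local Open Scope ring_scope.
Local Open Scope ereal_scope.

Lemma le_integral_nm (d : measure_display) (T : measurableType d) (R : realType)
  (mu : {measure set T -> \bar R}) (D : set T) (f1 f2 : T -> \bar R) :
  (forall x, D x -> 0 <= f1 x) -> (forall x, D x -> f1 x <= f2 x) ->
  \int[mu]_(x in D) f1 x <= \int[mu]_(x in D) f2 x.
Proof.
move=> f10 f12.
have f20 x : D x -> 0 <= f2 x by move=> Dx; exact: le_trans (f10 _ Dx) (f12 _ Dx).
rewrite (ge0_integralE _ f10) (ge0_integralE _ f20) /=.
apply: ereal_sup_le => _ [h /= hf1 <-]; exists h => //= x.
apply: le_trans (hf1 x) _; rewrite /patch; case: ifPn => [/set_mem Dx|_] //.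
exact: f12.
Qed.

Theorem mainTheorem5 (d : measure_display) (T : measurableType d) (R : realType)
  (lam : {measure set T -> \bar R}) (N : nat) (pi : nat -> T -> R)
  (J : nat) (A : 'I_J -> set T) :
  (1 <= N)%N ->
  prob_densities lam N pi ->
  is_partition A ->
  (forall k j, (k <= N)%N -> 0 < piA lam pi k (A j)) ->
  forall (i j : 'I_J) (k : nat), (k < N)%N ->
    (\int[lam]_(z in A i) \int[lam]_(w in A j)
        (Num.min (pi k z * pi k.+1 w) (pi k w * pi k.+1 z))%:E)
      / (piA lam pi k (A i) * piA lam pi k.+1 (A j))
    >= delta lam N pi A ^+ 2.
Proof.
move=> N1 Hpi [mA _ _] Hpos i j k kN.
have [mk pk0 int1] := Hpi k (ltnW kN).
have [mk1 pk10 int11] := Hpi k.+1 kN.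
pose m := fun z => Num.min (pi k z) (pi k.+1 z).
have m0 z : (0 <= m z)%R by rewrite /m le_min pk0 pk10.
have mm D : measurable_fun D (EFin \o m : T -> \bar R).
  by apply/measurable_EFinP; apply: measurable_funTS; apply: measurable_minr.
set a := \int[lam]_(z in A i) (m z)%:E.
set b := \int[lam]_(z in A j) (m z)%:E.
have b0 : 0 <= b by apply: integral_ge0 => z _; rewrite lee_fin.
have inner z : (m z)%:E * b <= \int[lam]_(w in A j)
     (Num.min (pi k z * pi k.+1 w) (pi k w * pi k.+1 z))%:E.
  rewrite -(ge0_integralZl_EFin _ (mA j) _ (mm (A j)) (m0 z)); last first.
    by move=> x _; rewrite lee_fin.
  apply: le_integral_nm => w _; first by rewrite -EFinM lee_fin mulr_ge0.
  rewrite -EFinM lee_fin le_min; apply/andP; split.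
    by apply: ler_pM => //; rewrite /m ge_min lexx ?orbT.
  by rewrite mulrC; apply: ler_pM => //; rewrite /m ge_min lexx ?orbT.
have outer : a * b <= \int[lam]_(z in A i) \int[lam]_(w in A j)
        (Num.min (pi k z * pi k.+1 w) (pi k w * pi k.+1 z))%:E.
  rewrite /a -(ge0_integralZr _ (mA i) (mm (A i))) //; last first.
    by move=> x _; rewrite lee_fin.
  apply: le_integral_nm => z _; first by apply: mule_ge0 => //; rewrite lee_fin.
  exact: inner.
set DD := \int[lam]_(z in A i) _ in outer *.
have piA_le1 k' j' : (k' <= N)%N -> piA lam pi k' (A j') <= 1.
  move=> k'N; have [mk' pk'0 <-] := Hpi k' k'N.
  rewrite /piA; apply: ge0_subset_integral => //.
  - by apply/measurable_EFinP.
  - by move=> x _; rewrite lee_fin.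
have ov0 (k' l : 'I_N.+1) j' : 0 <= overlap_ratio lam pi k' l (A j').
  have [_ h0 _] := Hpi k' (ltn_ord k' : (k' <= N)%N).
  have [_ h1 _] := Hpi l (ltn_ord l : (l <= N)%N).
  apply: mule_ge0; first by apply: integral_ge0 => z _; rewrite lee_fin le_min h0 h1.
  by rewrite inve_ge0; apply: integral_ge0 => z _; rewrite lee_fin.
have del0 : 0 <= delta lam N pi A.
  apply: le_bigmin => // k' _; apply: le_bigmin => // l _.
  by apply: le_bigmin => // j' _; exact: ov0.
have kN1 : (k < N.+1)%N by rewrite ltnS ltnW.
have k1N1 : (k.+1 < N.+1)%N by rewrite ltnS.
have del1 : delta lam N pi A <= overlap_ratio lam pi k k.+1 (A i).
  rewrite /delta; apply: (bigmin_inf (Ordinal kN1)) => //.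
  apply: (bigmin_inf (Ordinal k1N1)) => /=; first by rewrite eqxx.
  exact: (bigmin_le _ i).
have del2 : delta lam N pi A <= overlap_ratio lam pi k.+1 k (A j).
  rewrite /delta; apply: (bigmin_inf (Ordinal k1N1)) => //.
  apply: (bigmin_inf (Ordinal kN1)) => /=; first by rewrite eqxx orbT.
  exact: (bigmin_le _ j).
have eb : \int[lam]_(z in A j) (Num.min (pi k.+1 z) (pi k z))%:E = b.
  by apply: eq_integral => z _; rewrite minC.
have hP := Hpos k i (ltnW kN); have hQ := Hpos k.+1 j kN.
have P1 := piA_le1 k i (ltnW kN); have Q1 := piA_le1 k.+1 j kN.
move: del1 del2 hP hQ P1 Q1; rewrite /overlap_ratio -/a eb.
move: (piA lam pi k (A i)) (piA lam pi k.+1 (A j)) => P Q.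
case: P => [p||] //; case: Q => [q||] //.
move=> d1 d2 hp hq _ _; rewrite lte_fin in hp hq.
rewrite inver gt_eqF // in d1; rewrite inver gt_eqF // in d2.
rewrite expe2 -EFinM inver mulf_eq0 !gt_eqF //=.
apply: le_trans (lee_pmul del0 del0 d1 d2) _.
rewrite muleACA -EFinM -invfM.
apply: lee_wpmul2r; last exact: outer.
by rewrite lee_fin invr_ge0 mulr_ge0 // ltW.
Qed.
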